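(* For $\tau\in P\Lambda^{n-k,k}$ the map $\Psi_\tau(f)[B]=D(f)[1_{\pi^{-1}(B)}\tau] $ is given for $f\in\mathrm{Conv}(\mathbb{R}^n,\mathbb{R})\cap C^2(\mathbb{R}^n)$ by \begin{align*} \Psi_\tau(f)[B]=\int_{B}P_\tau(D^2f(x))d\mathrm{vol}_n(x)\quad\text{for all bounded Borel sets } B\subset\mathbb{R}^n. \end{align*}
   Context: $\mathrm{Conv}(\mathbb{R}^n,\mathbb{R})$ denotes the finite-valued convex functions on $\mathbb{R}^n$. $P\Lambda^{n-k,k}$ is the space of constant complex forms in $\Lambda^{n-k}\mathbb{R}^n\otimes\Lambda^k(\mathbb{R}^n)^*$ on $T^*\mathbb{R}^n=\mathbb{R}^n\times(\mathbb{R}^n)^*$ that are primitive ($\omega_s\wedge\tau=0$ for the symplectic form $\omega_s$); $\pi$ is the projection onto the first factor and $D(f)$ Fu's differential cycle. Extending $\tau$ $\mathbb{C}$-linearly to a constant holomorphic form on $\mathbb{C}^n\times(\mathbb{C}^n)^*$, $P_\tau$ is the polynomial on complex symmetric $(n\times n)$-matrices defined by $F_Q^*\tau=P_\tau(Q)dz_1\wedge\dots\wedge dz_n$, where $F_Q(z)=(z,z^TQ)$. *)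

(* Defs.v *)
From HB Require Import structures.
From mathcomp Require Import all_boot all_order all_algebra.
From mathcomp Require Import all_classical all_reals all_analysis.
From mathcomp Require Import complex.
Set Implicit Arguments. Unset Strict Implicit. Unset Printing Implicit Defensive.
Import Order.TTheory GRing.Theory Num.Theory.
Import numFieldNormedType.Exports.
Local Open Scope classical_set_scope.
Local Open Scope ring_scope.
Local Open Scope complex_scope.

Section Defs.
Variable R : realType.

Definition evec (n : nat) (i : 'I_n) : 'rV[R]_n := delta_mx 0 i.

Definition partial (n : nat) (f : 'rV[R]_n -> R) (i : 'I_n) : 'rV[R]_n -> R :=
  fun x => derive f x (evec i).

Definition hessian (n : nat) (f : 'rV[R]_n -> R) (x : 'rV[R]_n) : 'M[R]_n :=
  \matrix_(i < n, j < n) partial (partial f i) j x.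

Definition C2 (n : nat) (f : 'rV[R]_n -> R) : Prop :=
  continuous f /\
  (forall i x, derivable f x (evec i)) /\
  (forall i, continuous (partial f i)) /\
  (forall i j x, derivable (partial f i) x (evec j)) /\
  (forall i j, continuous (partial (partial f i) j)).

Definition convex_fun (n : nat) (f : 'rV[R]_n -> R) : Prop :=
  forall (x y : 'rV[R]_n) (t : R), 0 <= t <= 1 ->
    f (t *: x + (1 - t) *: y) <= t * f x + (1 - t) * f y.

Definition borel_rV (n : nat) (B : set 'rV[R]_n) : Prop :=
  smallest (sigma_algebra setT) (@open 'rV[R]_n) B.

Definition bounded_rV (n : nat) (B : set 'rV[R]_n) : Prop :=
  exists M : R, forall x, B x -> `|x| <= M.

(* Lebesgue integral over R^n, computed as the iterated one-dimensional
   Lebesgue integral (Fubini); x = (x_0, x') with x' in R^(n-1). *)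
Fixpoint iint (n : nat) : ('rV[R]_n -> R) -> R :=
  match n return ('rV[R]_n -> R) -> R with
  | 0 => fun F => F 0
  | m.+1 => fun F =>
      Rintegral (@lebesgue_measure R) setT
        (fun t : R => iint (fun v : 'rV[R]_m => F (row_mx (t%:M : 'rV[R]_1) v)))
  end.

Definition cre (z : R[i]) : R := let: Complex a _ := z in a.
Definition cim (z : R[i]) : R := let: Complex _ b := z in b.

Definition cint (n : nat) (B : set 'rV[R]_n) (g : 'rV[R]_n -> R[i]) : R[i] :=
  Complex (iint (fun x => \1_B x * cre (g x)))
          (iint (fun x => \1_B x * cim (g x))).

(* Coordinates of T^*R^n = 'rV_(n+n): index lshift n i is x_i (base),
   index rshift n i is y_i (fiber).  An n-form is given by its coefficients
   c_S on the basis forms dz_{s_1} /\ ... /\ dz_{s_n}, S = {s_1 < ... < s_n};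
   coefficients of sets with #|S| <> n are irrelevant. *)
Definition cform (n : nat) := {set 'I_(n + n)} -> R[i].

Definition xidx (n : nat) (i : 'I_n) : 'I_(n + n) := lshift n i.
Definition yidx (n : nat) (i : 'I_n) : 'I_(n + n) := rshift n i.
Definition xpart (n : nat) : {set 'I_(n + n)} := [set xidx i | i : 'I_n].
Definition ypart (n : nat) : {set 'I_(n + n)} := [set yidx i | i : 'I_n].

Definition sel (n : nat) (S : {set 'I_(n + n)}) (i : 'I_n) : 'I_(n + n) :=
  nth (xidx i) (enum S) i.

(* value of a constant n-form with coefficients in a commutative ring K
   (through phi : C -> K) on n vectors v_0..v_{n-1} of K^(2n):
   (dz_{s_1}/\.../\dz_{s_n})(v_1,...,v_n) = det [dz_{s_i}(v_l)]_{i,l} *)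
Definition form_eval (n : nat) (tau : cform n) (v : 'I_n -> 'rV[R[i]]_(n + n))
  : R[i] :=
  \sum_(S : {set 'I_(n + n)} | #|S| == n)
     tau S * \det (\matrix_(i < n, l < n) v l 0 (sel S i)).

(* tau is of bidegree in  Lambda^(n-k) R^n (x) Lambda^k (R^n)^*  :
   k differentials dx (base) and n-k differentials dy (fiber). *)
Definition bidegree (n k : nat) (tau : cform n) : Prop :=
  forall S : {set 'I_(n + n)},
    tau S != 0 -> (#|S| == n) && (#|S :&: xpart n| == k).

(* omega_s /\ tau = 0, omega_s = sum_i dx_i /\ dy_i.  Coefficient of the
   basis (n+2)-form dz_T in omega_s /\ tau. *)
Definition omega_wedge_coef (n : nat) (tau : cform n) (T : {set 'I_(n + n)})
  : R[i] :=
  \sum_(i < n | (xidx i \in T) && (yidx i \in T))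
    (-1) ^+ (#|[set s in T :\ xidx i :\ yidx i | (s < xidx i)%N]|
             + #|[set s in T :\ xidx i :\ yidx i | (s < yidx i)%N]|)
    * tau (T :\ xidx i :\ yidx i).

Definition primitive (n : nat) (tau : cform n) : Prop :=
  forall T : {set 'I_(n + n)}, #|T| == n.+2 -> omega_wedge_coef tau T = 0.

Definition PLambda (n k : nat) (tau : cform n) : Prop :=
  bidegree k tau /\ primitive tau.

(* F_Q(z) = (z, z^T Q); d F_Q / d z_l = (e_l, (Q_{l j})_j).
   F_Q^* tau = tau(dF_Q e_1, ..., dF_Q e_n) dz_1 /\ ... /\ dz_n. *)
Definition dFQ (n : nat) (Q : 'M[R[i]]_n) (l : 'I_n) : 'rV[R[i]]_(n + n) :=
  row_mx (delta_mx 0 l) (row l Q).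

Definition P_tau (n : nat) (tau : cform n) (Q : 'M[R[i]]_n) : R[i] :=
  form_eval tau (dFQ Q).

(* For f in C^2, D(f) is the current of integration over the graph of df,
   oriented by the parametrization G(x) = (x, df(x)):
   D(f)[phi] = \int_{R^n} phi(G x)(dG(x) e_1, ..., dG(x) e_n) dx,
   for phi a (non constant) n-form on T^*R^n given by coefficient functions. *)
Definition dG (n : nat) (f : 'rV[R]_n -> R) (x : 'rV[R]_n) (l : 'I_n)
  : 'rV[R[i]]_(n + n) :=
  map_mx (fun r : R => r%:C)
    (row_mx (evec l) (\row_(j < n) partial (partial f j) l x)).

Definition graph_pt (n : nat) (f : 'rV[R]_n -> R) (x : 'rV[R]_n)
  : 'rV[R]_(n + n) :=
  row_mx x (\row_(j < n) partial f j x).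

Definition Dcycle_C2 (n : nat) (f : 'rV[R]_n -> R)
  (phi : 'rV[R]_(n + n) -> cform n) : R[i] :=
  cint setT (fun x => form_eval (phi (graph_pt f x)) (dG f x)).

Definition proj_base (n : nat) (p : 'rV[R]_(n + n)) : 'rV[R]_n := lsubmx p.

Definition Psi (n : nat) (tau : cform n) (f : 'rV[R]_n -> R)
  (B : set 'rV[R]_n) : R[i] :=
  Dcycle_C2 f (fun p S => (\1_(@proj_base n @^-1` B) p : R)%:C * tau S).

End Defs.

(* Main.v *)
Require Import Defs.
From HB Require Import structures.
From mathcomp Require Import all_boot all_order all_algebra.
From mathcomp Require Import all_classical all_reals all_analysis.
From mathcomp Require Import complex.
From mathcomp Require Import lra.
Import Order.TTheory GRing.Theory Num.Theory.
Import numFieldNormedType.Exports.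
Local Open Scope classical_set_scope.
Local Open Scope ring_scope.
Local Open Scope complex_scope.

Section S.
Variables (R : realType) (n : nat).
Local Notation V := 'rV[R]_n.

Lemma line_is_derive (f : V -> R) (y v : V) (s : R) :
  derivable f (s *: v + y) v ->
  is_derive s 1 (fun t : R => f (t *: v + y)) (derive f (s *: v + y) v).
Proof.
move=> df.
have E : (fun h : R => h^-1 *: (((fun t : R => f (t *: v + y)) \o shift s) (h *: 1)
             - f (s *: v + y))) =
         (fun h : R => h^-1 *: ((f \o shift (s *: v + y)) (h *: v) - f (s *: v + y))).
  by apply/funext => h /=; rewrite [h%:A]mulr1 scalerDl addrA.
by split; rewrite /derivable /derive E.
Qed.

Lemma route (f : V -> R) (u v x : V) (h : R) :
  (forall y, derivable f y u) ->
  (forall y, derivable (fun z => derive f z u) y v) ->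
  0 < h ->
  exists a b, [/\ 0 <= a <= h, 0 <= b <= h &
    f (h *: u + (h *: v + x)) - f (h *: u + x) - (f (h *: v + x) - f x) =
    derive (fun z => derive f z u) (b *: v + (a *: u + x)) v * h * h].
Proof.
move=> du dvu h0.
pose phi := fun s : R => f (s *: u + (h *: v + x)) - f (s *: u + x).
have dphi : forall s : R, is_derive s 1 phi
   (derive f (s *: u + (h *: v + x)) u - derive f (s *: u + x) u).
  move=> s.
  have d1 := @line_is_derive f (h *: v + x) u s (du _).
  have d2 := @line_is_derive f x u s (du _).
  exact: (is_deriveB d1 d2).
have [a ain Ea] := @MVT R phi _ 0 h h0 (fun s _ => dphi s)
   (derivable_within_continuous (fun s _ => @ex_derive _ _ _ _ _ _ _ (dphi s))).
pose psi := fun t : R => derive f (t *: v + (a *: u + x)) u.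
have dpsi : forall t : R, is_derive t 1 psi (derive (fun z => derive f z u) (t *: v + (a *: u + x)) v).
  move=> t; exact: (@line_is_derive (fun z => derive f z u)).
have [b bin Eb] := @MVT R psi _ 0 h h0 (fun s _ => dpsi s)
   (derivable_within_continuous (fun s _ => @ex_derive _ _ _ _ _ _ _ (dpsi s))).
exists a, b; split.
- by move: ain; rewrite in_itv /= => /andP[/ltW -> /ltW ->].
- by move: bin; rewrite in_itv /= => /andP[/ltW -> /ltW ->].
move: Ea; rewrite /phi !scale0r !add0r subr0 => ->.
congr (_ * _).
move: Eb; rewrite /psi scale0r add0r subr0 => <-.
by rewrite addrCA.
Qed.

Lemma route2 (f : V -> R) (u v x : V) (h : R) :
  (forall y, derivable f y u) ->
  (forall y, derivable (fun z => derive f z u) y v) ->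
  0 < h ->
  exists p : V, `|x - p| <= h * (`|u| + `|v|) /\
    f (h *: u + (h *: v + x)) - f (h *: u + x) - (f (h *: v + x) - f x) =
    derive (fun z => derive f z u) p v * h * h.
Proof.
move=> du dvu h0.
have [a [b [/andP[a0 ah] /andP[b0 bh] E]]] := route f u v x h du dvu h0.
exists (b *: v + (a *: u + x)); split => //.
have -> : x - (b *: v + (a *: u + x)) = - (b *: v + a *: u).
  by rewrite addrA opprD addrCA subrr addr0.
rewrite normrN (le_trans (ler_normD _ _)) // !normrZ !ger0_norm //.
rewrite mulrDr addrC lerD // ler_wpM2r //.
Qed.

Lemma fin_contra (A B g1 g2 : R) : g1 = g2 -> `|A - g1| < `|A - B| / 2 ->
  `|B - g2| < `|A - B| / 2 -> False.
Proof.
move=> -> L1; rewrite distrC => L2.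
have T := ler_normD (A - g2) (g2 - B).
rewrite addrA subrK in T.
have := le_lt_trans T (ltrD L1 L2).
by rewrite -splitr ltxx.
Qed.

Lemma schwarz (f : V -> R) (u v x : V) :
  (forall y, derivable f y u) -> (forall y, derivable f y v) ->
  (forall y, derivable (fun z => derive f z u) y v) ->
  (forall y, derivable (fun z => derive f z v) y u) ->
  {for x, continuous (fun y => derive (fun z => derive f z u) y v)} ->
  {for x, continuous (fun y => derive (fun z => derive f z v) y u)} ->
  derive (fun z => derive f z u) x v = derive (fun z => derive f z v) x u.
Proof.
move=> du dv duv dvu c1 c2.
set A := derive _ x v; set B := derive _ x u.
have [//|neq] := eqVneq A B.
have e0 : 0 < `|A - B| / 2 by rewrite divr_gt0 // normr_gt0 subr_eq0.
have [d1 /= d10 H1] := iffLR (nbhs_normP _ _) (cvgr_dist_lt _ _ c1 _ e0).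
have [d2 /= d20 H2] := iffLR (nbhs_normP _ _) (cvgr_dist_lt _ _ c2 _ e0).
pose d := Num.min d1 d2.
have d0 : 0 < d by rewrite lt_min d10 d20.
have N0 : 0 < `|u| + `|v| + 1 by rewrite ltr_wpDl // addr_ge0.
pose h := d / (`|u| + `|v| + 1).
have h0 : 0 < h by rewrite divr_gt0.
have hd : h * (`|u| + `|v|) < d.
  have -> : d = h * (`|u| + `|v| + 1) by rewrite /h divfK // gt_eqF.
  by rewrite ltr_pM2l // ltrDl.
have [p1 [B1 E1]] := route2 f u v x h du duv h0.
have [p2 [B2 E2]] := route2 f v u x h dv dvu h0.
have hn : h != 0 by rewrite gt_eqF.
have eD : f (h *: u + (h *: v + x)) - f (h *: u + x) - (f (h *: v + x) - f x) =
     f (h *: v + (h *: u + x)) - f (h *: v + x) - (f (h *: u + x) - f x).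
  rewrite [h *: v + (h *: u + x)]addrCA.
  rewrite !opprB !addrA addrAC [RHS]addrAC; congr (_ + _); exact: addrAC.
have eqg' := etrans (esym E1) (etrans eD E2).
have eqg := mulIf hn (mulIf hn eqg').
have m1 : d <= d1 by rewrite /d ge_min lexx.
have m2 : d <= d2 by rewrite /d ge_min lexx orbT.
have hd' : h * (`|v| + `|u|) < d by rewrite addrC.
have L1 := H1 p1 (lt_le_trans (le_lt_trans B1 hd) m1).
have L2 := H2 p2 (lt_le_trans (le_lt_trans B2 hd') m2).
exfalso; exact: (fin_contra _ _ _ _ eqg L1 L2).
Qed.
End S.

Lemma form_eval_scale (R : realType) n (c : R[i]) (tau : cform R n) v :
  form_eval (fun S => c * tau S) v = c * form_eval tau v.
Proof. by rewrite /form_eval mulr_sumr; apply: eq_bigr => S _; rewrite mulrA. Qed.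

Lemma cre_scale (R : realType) (c : R) (z : R[i]) : cre (c%:C * z) = c * cre z.
Proof. by case: z => a b /=; rewrite mul0r subr0. Qed.

Lemma cim_scale (R : realType) (c : R) (z : R[i]) : cim (c%:C * z) = c * cim z.
Proof. by case: z => a b /=; rewrite mul0r addr0. Qed.


Theorem proposition6p17 (R : realType) (n k : nat) (tau : cform R n)
  (f : 'rV[R]_n -> R) :
  (k <= n)%N -> PLambda k tau ->
  convex_fun f -> C2 f ->
  forall B : set 'rV[R]_n, borel_rV B -> bounded_rV B ->
    Psi tau f B =
    cint B (fun x => P_tau tau (map_mx (fun r : R => r%:C) (hessian f x))).
Proof.
move=> kn tauP cvx [fc [d1 [c1 [d2 c2]]]] B _ _.
have sym : forall x i j, partial (partial f i) j x = partial (partial f j) i x.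
  move=> x i j; apply: schwarz => //; [exact: d2 i j | exact: d2 j i | exact: c2 i j x | exact: c2 j i x].
have dGE : forall x, dG f x = dFQ (map_mx (fun r : R => r%:C) (hessian f x)).
  move=> x; apply/funext => l; rewrite /dG /dFQ map_row_mx; congr row_mx.
    apply/matrixP => a b; rewrite /evec /map_mx !mxE; case: (_ && _) => //.
  by apply/matrixP => a b; rewrite /map_mx !mxE sym.
have ind : forall x, \1_(@proj_base R n @^-1` B) (graph_pt f x) = \1_B x :> R.
  by move=> x; rewrite /graph_pt /proj_base /preimage /indic /=; congr (_%:R); rewrite /in_mem /= /in_set /= row_mxKl.
rewrite /Psi /Dcycle_C2 /cint; congr Complex; congr iint; apply/funext => x.
  by rewrite form_eval_scale dGE ind cre_scale /P_tau indicT mul1r.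
by rewrite form_eval_scale dGE ind cim_scale /P_tau indicT mul1r.
Qed.
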